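(* Let $(\ell_n)$, $(\sigma_{n,0})$, $(\sigma_{n,1})$, $(\sigma_{n,-1})$ ($n\in\mathbb N$) be sequences of strictly positive reals and $(\kappa_n)_{n\in\mathbb N}$ a sequence of reals. Put $\sigma_n=\max(\sigma_{n,-1},\sigma_{n,1})$ and assume $\sigma_n\le\sigma_{n,0}$ and $\kappa_n\ge0$ for all $n\in\mathbb N$, and $$\liminf_{n\to\infty}\frac{\ell_n}{n^2\sigma_{n,0}}=0 .$$ Let $x_0\in\mathbb R$ satisfy $\sigma_{1,-1}x_0\ge-\kappa_1$ (e.g. $x_0=0$). Then there exists a unique $x_1>0$ such that the sequence $(x_n)_{n\in\mathbb N}$ satisfying $$\ell_n = x_n\big(\sigma_{n,1}x_{n+1}+\sigma_{n,0}x_n+\sigma_{n,-1}x_{n-1}\big)+\kappa_n x_n,\qquad n\in\mathbb N,$$ is positive (i.e. $x_n>0$ for all $n\in\mathbb N$).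
   Context: $\mathbb N=\{1,2,3,\dots\}$. Since $\sigma_{n,1}>0$, the equation determines $x_{n+1}$ from $x_{n-1}$ and $x_n\ne0$, so the sequence is determined by $x_0$ and $x_1$ as long as no $x_n$ ($n\ge1$) vanishes. *)

(* Defs.v *)
From Stdlib Require Import Reals Lra Lia.
Open Scope R_scope.

Definition is_liminf (u : nat -> R) (l : R) : Prop :=
  (forall eps : R, 0 < eps -> exists N : nat, forall n : nat, (N <= n)%nat -> l - eps < u n) /\
  (forall eps : R, 0 < eps -> forall N : nat, exists n : nat, (N <= n)%nat /\ u n < l + eps).

(* Solving  ell k = x_k (s1 k x_{k+1} + s0 k x_k + sm1 k x_{k-1}) + kappa k x_k
   for x_{k+1}, given a = x_{k-1} and b = x_k (b <> 0, s1 k > 0). *)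
Definition rec_next (ell s0 s1 sm1 kappa : nat -> R) (k : nat) (a b : R) : R :=
  (ell k / b - kappa k - s0 k * b - sm1 k * a) / s1 k.

(* rec_pair ... n = (x_n, x_{n+1}) *)
Fixpoint rec_pair (ell s0 s1 sm1 kappa : nat -> R) (x0 x1 : R) (n : nat) : R * R :=
  match n with
  | O => (x0, x1)
  | S m => let (a, b) := rec_pair ell s0 s1 sm1 kappa x0 x1 m in
           (b, rec_next ell s0 s1 sm1 kappa (S m) a b)
  end.

Definition rec_seq (ell s0 s1 sm1 kappa : nat -> R) (x0 x1 : R) (n : nat) : R :=
  fst (rec_pair ell s0 s1 sm1 kappa x0 x1 n).

(* Main.v *)
Require Import Defs.
From Stdlib Require Import Reals Lra Lia Classical.
Open Scope R_scope.

Section Main.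
Variables ell s0 s1 sm1 kappa : nat -> R.
Variable x0 : R.
Hypothesis Hell : forall n : nat, (1 <= n)%nat -> 0 < ell n.
Hypothesis Hs0 : forall n : nat, (1 <= n)%nat -> 0 < s0 n.
Hypothesis Hs1 : forall n : nat, (1 <= n)%nat -> 0 < s1 n.
Hypothesis Hsm1 : forall n : nat, (1 <= n)%nat -> 0 < sm1 n.
Hypothesis Hsig : forall n : nat, (1 <= n)%nat -> Rmax (sm1 n) (s1 n) <= s0 n.
Hypothesis Hkappa : forall n : nat, (1 <= n)%nat -> 0 <= kappa n.
Hypothesis Hx0 : sm1 1%nat * x0 >= - kappa 1%nat.

Local Notation X := (rec_seq ell s0 s1 sm1 kappa x0).

Lemma X_0 x1 : X x1 0 = x0. Proof. reflexivity. Qed.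
Lemma X_1 x1 : X x1 1 = x1. Proof. reflexivity. Qed.
Lemma X_rec x1 m : X x1 (S (S m)) = rec_next ell s0 s1 sm1 kappa (S m) (X x1 m) (X x1 (S m)).
Proof. unfold rec_seq; simpl. destruct (rec_pair ell s0 s1 sm1 kappa x0 x1 m); reflexivity. Qed.

Lemma X_eq x1 m : s1 (S m) * X x1 (S (S m)) =
  ell (S m) / X x1 (S m) - kappa (S m) - s0 (S m) * X x1 (S m) - sm1 (S m) * X x1 m.
Proof.
  rewrite X_rec; unfold rec_next.
  assert (H : s1 (S m) <> 0) by (specialize (Hs1 (S m)); lra || (assert (0 < s1 (S m)) by (apply Hs1; lia); lra)).
  generalize (ell (S m) / X x1 (S m) - kappa (S m) - s0 (S m) * X x1 (S m) - sm1 (S m) * X x1 m).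
  intro a; field; auto.
Qed.

Definition sg (k : nat) : R := (-1) ^ k.
Lemma sg_S k : sg (S k) = - sg k. Proof. unfold sg; simpl; ring. Qed.
Lemma sg_sq k : sg k * sg k = 1.
Proof. induction k. unfold sg; simpl; ring. rewrite sg_S. lra. Qed.
Lemma sg_even m : sg (2 * m) = 1. Proof. apply pow_1_even. Qed.
Lemma sg_odd m : sg (S (2 * m)) = -1. Proof. rewrite sg_S, sg_even; ring. Qed.

Definition e u v j := sg (S j) * (X v j - X u j).

Lemma e_rec u v m : 0 < X u (S m) -> 0 < X v (S m) ->
  s1 (S m) * e u v (S (S m)) =
  (s0 (S m) + ell (S m) / (X u (S m) * X v (S m))) * e u v (S m) - sm1 (S m) * e u v m.
Proof.
  intros Hu Hv. unfold e.
  assert (E3 : sg (S (S (S m))) = sg (S m)) by (rewrite !sg_S; ring).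
  assert (E2 : sg (S (S m)) = - sg (S m)) by (rewrite !sg_S; ring).
  rewrite E3, E2.
  pose proof (X_eq u m) as Eu. pose proof (X_eq v m) as Ev.
  assert (E : s1 (S m) * (X v (S (S m)) - X u (S (S m))) =
     ell (S m) / X v (S m) - ell (S m) / X u (S m) - s0 (S m) * (X v (S m) - X u (S m))
     - sm1 (S m) * (X v m - X u m)) by lra.
  replace (s1 (S m) * (sg (S m) * (X v (S (S m)) - X u (S (S m)))))
    with (sg (S m) * (s1 (S m) * (X v (S (S m)) - X u (S (S m))))) by ring.
  rewrite E. field. split; lra.
Qed.

Definition good x1 k := forall i, (1 <= i <= k)%nat -> 0 < X x1 i.

Lemma ellb x1 m : 0 < X x1 (S m) -> 0 <= X x1 (S (S m)) ->
  0 <= kappa (S m) + sm1 (S m) * X x1 m ->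
  s0 (S m) * (X x1 (S m) * X x1 (S m)) <= ell (S m).
Proof.
  intros H1 H2 H3. pose proof (X_eq x1 m) as E.
  assert (Hs : 0 < s1 (S m)) by (apply Hs1; lia).
  assert (P : 0 <= s1 (S m) * X x1 (S (S m))) by (apply Rmult_le_pos; lra).
  assert (Q : s0 (S m) * X x1 (S m) <= ell (S m) / X x1 (S m)) by lra.
  replace (ell (S m)) with (X x1 (S m) * (ell (S m) / X x1 (S m))) by (field; lra).
  apply Rmult_le_compat_l with (r := X x1 (S m)) in Q; lra.
Qed.

Lemma kcond x1 k m : good x1 k -> (m <= k)%nat -> 0 <= kappa (S m) + sm1 (S m) * X x1 m.
Proof.
  intros G Hm. destruct m.
  - rewrite X_0. lra.
  - assert (0 < X x1 (S m)) by (apply G; lia).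
    assert (0 <= kappa (S (S m))) by (apply Hkappa; lia).
    assert (0 < sm1 (S (S m))) by (apply Hsm1; lia).
    assert (0 <= sm1 (S (S m)) * X x1 (S m)) by (apply Rmult_le_pos; lra). lra.
Qed.

Lemma cge u v k m : good u k -> good v k -> (S (S m) <= k)%nat ->
  s0 (S m) <= ell (S m) / (X u (S m) * X v (S m)).
Proof.
  intros Gu Gv Hk.
  assert (U : 0 < X u (S m)) by (apply Gu; lia).
  assert (V : 0 < X v (S m)) by (apply Gv; lia).
  assert (U2 : 0 < X u (S (S m))) by (apply Gu; lia).
  assert (V2 : 0 < X v (S (S m))) by (apply Gv; lia).
  pose proof (ellb u m U ltac:(lra) (kcond u k m Gu ltac:(lia))) as Bu.
  pose proof (ellb v m V ltac:(lra) (kcond v k m Gv ltac:(lia))) as Bv.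
  assert (Hs : 0 < s0 (S m)) by (apply Hs0; lia).
  assert (s0 (S m) * (X u (S m) * X v (S m)) <= ell (S m)).
  { destruct (Rle_dec (X u (S m)) (X v (S m))).
    - assert (X u (S m) * X v (S m) <= X v (S m) * X v (S m)) by (apply Rmult_le_compat_r; lra).
      apply Rmult_le_compat_l with (r := s0 (S m)) in H; lra.
    - assert (X u (S m) * X v (S m) <= X u (S m) * X u (S m)) by (apply Rmult_le_compat_l; lra).
      apply Rmult_le_compat_l with (r := s0 (S m)) in H; lra. }
  assert (0 < X u (S m) * X v (S m)) by (apply Rmult_lt_0_compat; lra).
  apply Rmult_le_reg_r with (r := X u (S m) * X v (S m)); auto.
  replace (ell (S m) / (X u (S m) * X v (S m)) * (X u (S m) * X v (S m))) with (ell (S m)) by (field; lra).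
  lra.
Qed.

Lemma sig_le n : (1 <= n)%nat -> sm1 n <= s0 n /\ s1 n <= s0 n.
Proof. intro H. pose proof (Hsig n H). pose proof (Rmax_l (sm1 n) (s1 n)).
  pose proof (Rmax_r (sm1 n) (s1 n)). lra. Qed.

Lemma comp u v k : 0 < u < v -> good u k -> good v k ->
  forall j, (1 <= j <= k)%nat -> e u v j >= INR j * (v - u) /\ e u v j - e u v (j - 1) >= v - u.
Proof.
  intros Huv Gu Gv j. induction j as [|j IH]; intro Hj. lia.
  destruct j as [|j].
  - unfold e. replace (1-1)%nat with 0%nat by lia. rewrite X_1, X_1, X_0, X_0. unfold sg; simpl. lra.
  - destruct IH as [IH1 IH2]. lia.
    replace (S j - 1)%nat with j in IH2 by lia.
    replace (S (S j) - 1)%nat with (S j) by lia.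
    rewrite S_INR.
    assert (U : 0 < X u (S j)) by (apply Gu; lia).
    assert (V : 0 < X v (S j)) by (apply Gv; lia).
    pose proof (e_rec u v j U V) as R.
    pose proof (cge u v k j Gu Gv ltac:(lia)) as C.
    set (c := ell (S j) / (X u (S j) * X v (S j))) in *.
    set (E2 := e u v (S (S j))) in *. set (E1 := e u v (S j)) in *. set (E0 := e u v j) in *.
    set (d := v - u) in *.
    assert (Hd : 0 < d) by (unfold d; lra).
    pose proof (pos_INR j) as Pj. rewrite S_INR in IH1.
    assert (HE1 : E1 >= d) by nra.
    destruct (sig_le (S j) ltac:(lia)) as [L1 L2].
    assert (S1 : 0 < s1 (S j)) by (apply Hs1; lia).
    assert (S2 : 0 < sm1 (S j)) by (apply Hsm1; lia).
    assert (K : 0 <= E2 - E1 - d).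
    { apply (Rmult_le_reg_l (s1 (S j))); [lra|]. rewrite Rmult_0_r.
      destruct (Rle_dec (s1 (S j)) (sm1 (S j))).
      - assert (H1 : 0 <= (s0 (S j) + c - s1 (S j) - sm1 (S j)) * E1) by (apply Rmult_le_pos; lra).
        assert (H2 : 0 <= sm1 (S j) * (E1 - E0 - d)) by (apply Rmult_le_pos; lra).
        assert (H3 : 0 <= (sm1 (S j) - s1 (S j)) * d) by (apply Rmult_le_pos; lra).
        nra.
      - assert (H1 : 0 <= (s0 (S j) + c - 2 * s1 (S j)) * E1) by (apply Rmult_le_pos; lra).
        assert (H2 : 0 <= sm1 (S j) * (E1 - E0 - d)) by (apply Rmult_le_pos; lra).
        assert (H3 : 0 <= (s1 (S j) - sm1 (S j)) * (E1 - d)) by (apply Rmult_le_pos; lra).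
        nra. }
    rewrite S_INR. split; nra.
Qed.

Lemma weak u v k : 0 < u < v -> good u k -> good v k -> e u v (S k) > 0.
Proof.
  intros Huv Gu Gv. destruct k as [|j].
  - unfold e. rewrite X_1, X_1. unfold sg; simpl. lra.
  - destruct (comp u v (S j) Huv Gu Gv (S j) ltac:(lia)) as [C1 C2].
    replace (S j - 1)%nat with j in C2 by lia.
    assert (U : 0 < X u (S j)) by (apply Gu; lia).
    assert (V : 0 < X v (S j)) by (apply Gv; lia).
    pose proof (e_rec u v j U V) as R.
    assert (Hc : 0 < ell (S j) / (X u (S j) * X v (S j))).
    { apply Rdiv_lt_0_compat. apply Hell; lia. apply Rmult_lt_0_compat; lra. }
    set (c := ell (S j) / (X u (S j) * X v (S j))) in *.
    set (E2 := e u v (S (S j))) in *. set (E1 := e u v (S j)) in *. set (E0 := e u v j) in *.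
    pose proof (pos_INR j) as Pj. rewrite S_INR in C1.
    assert (HE1 : E1 >= v - u) by nra.
    destruct (sig_le (S j) ltac:(lia)) as [L1 L2].
    assert (S1 : 0 < s1 (S j)) by (apply Hs1; lia).
    assert (S2 : 0 < sm1 (S j)) by (apply Hsm1; lia).
    assert (H1 : 0 <= (s0 (S j) - sm1 (S j)) * E1) by (apply Rmult_le_pos; lra).
    assert (H2 : 0 < c * E1) by (apply Rmult_lt_0_compat; lra).
    assert (H3 : 0 < sm1 (S j) * (E1 - E0)) by (apply Rmult_lt_0_compat; lra).
    assert (0 < s1 (S j) * E2) by nra.
    nra.
Qed.

Definition fail x1 n := (forall i, (1 <= i < n)%nat -> 0 < X x1 i) /\ X x1 n <= 0.
Definition Aset x1 := 0 < x1 /\ exists m, fail x1 (2*m+1).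
Definition Bset x1 := 0 < x1 /\ exists m, fail x1 (2*m+2).

Lemma order a b : Aset a -> Bset b -> a < b.
Proof.
  intros [Ha [m [Fa1 Fa2]]] [Hb [m' [Fb1 Fb2]]].
  destruct (Rtotal_order a b) as [|[Heq|Hlt]]; auto; exfalso.
  - subst. destruct (Compare_dec.lt_dec (2*m+1) (2*m'+2)).
    + pose proof (Fb1 (2*m+1)%nat ltac:(lia)). lra.
    + pose proof (Fa1 (2*m'+2)%nat ltac:(lia)). lra.
  - assert (Hba : 0 < b < a) by lra.
    destruct (Compare_dec.lt_dec (2*m+1) (2*m'+2)).
    + assert (Gb : good b (2*m)) by (intros i Hi; apply Fb1; lia).
      assert (Ga : good a (2*m)) by (intros i Hi; apply Fa1; lia).
      pose proof (weak b a (2*m) Hba Gb Ga) as W. unfold e in W.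
      replace (S (S (2*m))) with (2*(S m))%nat in W by lia. rewrite sg_even in W.
      replace (S (2*m)) with (2*m+1)%nat in W by lia.
      pose proof (Fb1 (2*m+1)%nat ltac:(lia)). lra.
    + assert (Gb : good b (2*m'+1)) by (intros i Hi; apply Fb1; lia).
      assert (Ga : good a (2*m'+1)) by (intros i Hi; apply Fa1; lia).
      pose proof (weak b a (2*m'+1) Hba Gb Ga) as W. unfold e in W.
      replace (S (S (2*m'+1))) with (S (2*(S m')))%nat in W by lia. rewrite sg_odd in W.
      replace (S (2*m'+1)) with (2*m'+2)%nat in W by lia.
      pose proof (Fa1 (2*m'+2)%nat ltac:(lia)). lra.
Qed.

Lemma blow y m Bd : 0 < X y (S m) <= 1 -> X y m <= Bd ->
  s1 (S m) * (ell (S (S m)) / s0 (S (S m)) + 1) + kappa (S m) + s0 (S m) + sm1 (S m) * Bd + 1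
    <= ell (S m) / X y (S m) ->
  0 < X y (S (S m)) /\ X y (S (S (S m))) < 0.
Proof.
  intros H1 H0 HK.
  assert (P0 : 0 < s0 (S (S m))) by (apply Hs0; lia).
  assert (Pl : 0 < ell (S (S m))) by (apply Hell; lia).
  assert (Pq : 0 < ell (S (S m)) / s0 (S (S m))) by (apply Rdiv_lt_0_compat; lra).
  set (M := ell (S (S m)) / s0 (S (S m)) + 1) in *.
  pose proof (X_eq y m) as E1.
  assert (S1 : 0 < s1 (S m)) by (apply Hs1; lia).
  assert (S0 : 0 < s0 (S m)) by (apply Hs0; lia).
  assert (Sm : 0 < sm1 (S m)) by (apply Hsm1; lia).
  assert (a1 : s0 (S m) * X y (S m) <= s0 (S m)) by nra.
  assert (a2 : sm1 (S m) * X y m <= sm1 (S m) * Bd) by nra.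
  assert (X2M : X y (S (S m)) > M) by nra.
  assert (X2pos : 0 < X y (S (S m))) by (unfold M in X2M; lra). split. lra.
  pose proof (X_eq y (S m)) as E2.
  set (X2 := X y (S (S m))) in *.
  assert (S1' : 0 < s1 (S (S m))) by (apply Hs1; lia).
  assert (Sm' : 0 < sm1 (S (S m))) by (apply Hsm1; lia).
  assert (K' : 0 <= kappa (S (S m))) by (apply Hkappa; lia).
  assert (Q : ell (S (S m)) < s0 (S (S m)) * (X2 * X2)).
  { assert (X2 > 1) by (unfold M in X2M; lra). assert (X2 * X2 > X2) by nra.
    assert (HH : ell (S (S m)) / s0 (S (S m)) < X2 * X2) by (unfold M in X2M; lra).
    apply (Rmult_lt_compat_l (s0 (S (S m)))) in HH; auto.
    replace (s0 (S (S m)) * (ell (S (S m)) / s0 (S (S m)))) with (ell (S (S m))) in HH by (field; lra).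
    lra. }
  assert (Q2 : ell (S (S m)) / X2 < s0 (S (S m)) * X2).
  { apply (Rmult_lt_reg_r X2). lra.
    replace (ell (S (S m)) / X2 * X2) with (ell (S (S m))) by (field; lra). lra. }
  assert (0 < sm1 (S (S m)) * X y (S m)) by nra.
  nra.
Qed.

Lemma cst_cont c x : continuity_pt (fct_cte c) x.
Proof. apply continuity_pt_const. intros a b; reflexivity. Qed.

Lemma cont n : forall x1, (forall i, (1 <= i <= n)%nat -> X x1 i <> 0) ->
  continuity_pt (fun y => X y n) x1 /\ continuity_pt (fun y => X y (S n)) x1.
Proof.
  induction n as [|n IH]; intros x1 Hnz.
  - split.
    + apply continuity_pt_const. intros a b; reflexivity.
    + change (continuity_pt id x1). apply derivable_continuous_pt, derivable_pt_id.
  - destruct (IH x1) as [C0 C1]. { intros i Hi; apply Hnz; lia. }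
    split; auto.
    apply continuity_pt_locally_ext with
      (f := fun y => rec_next ell s0 s1 sm1 kappa (S n) (X y n) (X y (S n))) (a := 1).
    lra. { intros y _; symmetry; apply X_rec. }
    unfold rec_next.
    change (continuity_pt ((((fct_cte (ell (S n)) / (fun y => X y (S n))) - fct_cte (kappa (S n)))
       - (fct_cte (s0 (S n)) * (fun y => X y (S n))) - (fct_cte (sm1 (S n)) * (fun y => X y n)))
       / fct_cte (s1 (S n)))%F x1).
    apply continuity_pt_div; [ | apply cst_cont | unfold fct_cte; assert (0 < s1 (S n)) by (apply Hs1; lia); lra].
    apply continuity_pt_minus; [apply continuity_pt_minus; [apply continuity_pt_minus|] | ].
    + apply continuity_pt_div; [apply cst_cont | exact C1 | exact (Hnz (S n) ltac:(lia))].
    + apply cst_cont.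
    + apply continuity_pt_mult; [apply cst_cont | exact C1].
    + apply continuity_pt_mult; [apply cst_cont | exact C0].
Qed.

Lemma cont_ed f x : continuity_pt f x -> forall eps, 0 < eps ->
  exists d, 0 < d /\ forall y, Rabs (y - x) < d -> Rabs (f y - f x) < eps.
Proof.
  intros H eps He. destruct (H eps He) as [d [Hd H']]. exists d. split; auto.
  intros y Hy. destruct (Req_dec y x) as [->|Hne].
  - rewrite Rminus_diag, Rabs_R0; lra.
  - apply (H' y). split. split. exact I. auto. exact Hy.
Qed.

Lemma good_open s k : good s k -> exists d, 0 < d /\ forall y, Rabs (y - s) < d -> good y k.
Proof.
  induction k as [|k IH]; intro G.
  - exists 1. split. lra. intros y _ i Hi; lia.
  - destruct IH as [d1 [Hd1 H1]]. { intros i Hi; apply G; lia. }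
    destruct (cont k s) as [_ C]. { intros i Hi. assert (0 < X s i) by (apply G; lia). lra. }
    assert (P : 0 < X s (S k)) by (apply G; lia).
    destruct (cont_ed _ _ C (X s (S k)) P) as [d2 [Hd2 H2]].
    exists (Rmin d1 d2). split. apply Rmin_pos; auto.
    intros y Hy i Hi.
    assert (Rabs (y - s) < d1) by (pose proof (Rmin_l d1 d2); lra).
    assert (Rabs (y - s) < d2) by (pose proof (Rmin_r d1 d2); lra).
    destruct (Nat.eq_dec i (S k)) as [->|].
    + pose proof (H2 y H0) as Q. apply Rabs_def2 in Q. lra.
    + apply (H1 y H). lia.
Qed.

Lemma near_fail s n : 0 < s -> (1 <= n)%nat -> fail s n ->
  exists d, 0 < d /\ forall y, Rabs (y - s) < d -> fail y n \/ fail y (n + 2).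
Proof.
  intros Hs Hn [F1 F2].
  destruct n as [|[|m]]. lia. { rewrite X_1 in F2. lra. }
  assert (G : good s (S m)) by (intros i Hi; apply F1; lia).
  destruct (good_open s (S m) G) as [d1 [Hd1 H1]].
  destruct (cont (S m) s) as [C0 C1]. { intros i Hi. assert (0 < X s i) by (apply G; lia). lra. }
  assert (Pm : 0 < X s (S m)) by (apply G; lia).
  set (Bd := X s (S m) + 1).
  set (K := s1 (S (S m)) * (ell (S (S (S m))) / s0 (S (S (S m))) + 1) + kappa (S (S m))
      + s0 (S (S m)) + sm1 (S (S m)) * Bd + 1).
  assert (Kp : 0 < K).
  { assert (0 < s0 (S (S (S m)))) by (apply Hs0; lia).
    assert (0 < ell (S (S (S m)))) by (apply Hell; lia).
    assert (0 < ell (S (S (S m))) / s0 (S (S (S m)))) by (apply Rdiv_lt_0_compat; lra).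
    assert (0 < s1 (S (S m))) by (apply Hs1; lia).
    assert (0 < sm1 (S (S m))) by (apply Hsm1; lia).
    assert (0 < s0 (S (S m))) by (apply Hs0; lia).
    assert (0 <= kappa (S (S m))) by (apply Hkappa; lia).
    assert (0 < s1 (S (S m)) * (ell (S (S (S m))) / s0 (S (S (S m))) + 1)) by (apply Rmult_lt_0_compat; lra).
    assert (0 < sm1 (S (S m)) * Bd) by (apply Rmult_lt_0_compat; unfold Bd; lra).
    unfold K; lra. }
  assert (Lp : 0 < ell (S (S m))) by (apply Hell; lia).
  assert (Ep : 0 < Rmin 1 (ell (S (S m)) / K)) by (apply Rmin_pos; [lra | apply Rdiv_lt_0_compat; lra]).
  destruct (cont_ed _ _ C1 _ Ep) as [d2 [Hd2 H2]].
  destruct (cont_ed _ _ C0 1 ltac:(lra)) as [d3 [Hd3 H3]].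
  exists (Rmin d1 (Rmin d2 d3)). split. repeat apply Rmin_pos; auto.
  intros y Hy.
  pose proof (Rmin_l d1 (Rmin d2 d3)). pose proof (Rmin_r d1 (Rmin d2 d3)).
  pose proof (Rmin_l d2 d3). pose proof (Rmin_r d2 d3).
  assert (Gy : good y (S m)) by (apply H1; lra).
  destruct (Rle_dec (X y (S (S m))) 0) as [Hle|Hgt].
  - left. split; auto. intros i Hi; apply Gy; lia.
  - right.
    pose proof (H2 y ltac:(lra)) as Q2. apply Rabs_def2 in Q2.
    pose proof (H3 y ltac:(lra)) as Q3. apply Rabs_def2 in Q3.
    pose proof (Rmin_l 1 (ell (S (S m)) / K)). pose proof (Rmin_r 1 (ell (S (S m)) / K)).
    assert (Xs : X y (S (S m)) <= ell (S (S m)) / K) by lra.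
    assert (KK : K <= ell (S (S m)) / X y (S (S m))).
    { apply (Rmult_le_reg_r (X y (S (S m)))). lra.
      replace (ell (S (S m)) / X y (S (S m)) * X y (S (S m))) with (ell (S (S m))) by (field; lra).
      apply (Rmult_le_compat_l K) in Xs; [|lra].
      replace (K * (ell (S (S m)) / K)) with (ell (S (S m))) in Xs by (field; lra). lra. }
    assert (P1 : 0 < X y (S (S m)) <= 1) by (split; lra).
    assert (P2 : X y (S m) <= Bd) by (unfold Bd; lra).
    destruct (blow y (S m) Bd P1 P2 KK) as [B1 B2].
    replace (S (S m) + 2)%nat with (S (S (S (S m)))) by lia.
    split; [|lra].
    intros i Hi.
    destruct (Nat.eq_dec i (S (S (S m)))) as [->|]; auto.
    destruct (Nat.eq_dec i (S (S m))) as [->|]. lra.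
    apply Gy; lia.
Qed.

Lemma A_ne : exists a, Aset a.
Proof.
  assert (P2 : 0 < s0 2) by (apply Hs0; lia).
  assert (L2 : 0 < ell 2) by (apply Hell; lia).
  assert (Q : 0 < ell 2 / s0 2) by (apply Rdiv_lt_0_compat; lra).
  set (K := s1 1 * (ell 2 / s0 2 + 1) + kappa 1 + s0 1 + sm1 1 * Rabs x0 + 1).
  assert (Kp : 0 < K).
  { assert (0 < s1 1) by (apply Hs1; lia). assert (0 < sm1 1) by (apply Hsm1; lia).
    assert (0 < s0 1) by (apply Hs0; lia). assert (0 <= kappa 1) by (apply Hkappa; lia).
    assert (0 < s1 1 * (ell 2 / s0 2 + 1)) by (apply Rmult_lt_0_compat; lra).
    assert (0 <= sm1 1 * Rabs x0) by (apply Rmult_le_pos; [lra | apply Rabs_pos]).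
    unfold K; lra. }
  assert (L1 : 0 < ell 1) by (apply Hell; lia).
  set (a := ell 1 / (K + ell 1)).
  assert (Ha : 0 < a) by (apply Rdiv_lt_0_compat; lra).
  assert (Ha1 : a <= 1).
  { unfold a. apply (Rmult_le_reg_r (K + ell 1)). lra.
    replace (ell 1 / (K + ell 1) * (K + ell 1)) with (ell 1) by (field; lra). lra. }
  assert (HK : K <= ell 1 / X a 1).
  { rewrite X_1. unfold a. replace (ell 1 / (ell 1 / (K + ell 1))) with (K + ell 1) by (field; lra). lra. }
  assert (P1 : 0 < X a 1 <= 1) by (rewrite X_1; lra).
  assert (P0 : X a 0 <= Rabs x0) by (rewrite X_0; apply Rle_abs).
  destruct (blow a 0 (Rabs x0) P1 P0 HK) as [B1 B2].
  exists a. split; auto. exists 1%nat. split; [|simpl; lra].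
  intros i Hi. destruct (Nat.eq_dec i 1) as [->|]. rewrite X_1; lra.
  replace i with 2%nat by lia. exact B1.
Qed.

Lemma B_ne : exists b, Bset b.
Proof.
  assert (P1 : 0 < s0 1) by (apply Hs0; lia).
  assert (L1 : 0 < ell 1) by (apply Hell; lia).
  assert (Q : 0 < ell 1 / s0 1) by (apply Rdiv_lt_0_compat; lra).
  set (b := ell 1 / s0 1 + 1).
  assert (Hb : 0 < b) by (unfold b; lra).
  exists b. split; auto. exists 0%nat. split.
  - intros i Hi. replace i with 1%nat by lia. rewrite X_1; lra.
  - simpl (2*0+2)%nat. pose proof (X_eq b 0) as E. rewrite X_1, X_0 in E.
    assert (S1 : 0 < s1 1) by (apply Hs1; lia).
    assert (ell 1 < s0 1 * (b * b)).
    { assert (b * b > b) by (unfold b in *; nra).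
      assert (HH : ell 1 / s0 1 < b * b) by (unfold b in *; lra).
      apply (Rmult_lt_compat_l (s0 1)) in HH; auto.
      replace (s0 1 * (ell 1 / s0 1)) with (ell 1) in HH by (field; lra). lra. }
    assert (ell 1 / b < s0 1 * b).
    { apply (Rmult_lt_reg_r b). lra.
      replace (ell 1 / b * b) with (ell 1) by (field; lra). lra. }
    assert (s1 1 * X b 2 <= 0) by lra.
    nra.
Qed.

Lemma exist : exists x1, 0 < x1 /\ forall n, (1 <= n)%nat -> 0 < X x1 n.
Proof.
  destruct A_ne as [a Ha]. destruct B_ne as [b Hb].
  destruct (completeness Aset) as [s [Hub Hlub]].
  { exists b. intros x Hx. left. apply order; auto. }
  { exists a; auto. }
  assert (Hs : 0 < s) by (pose proof (Hub a Ha); destruct Ha; lra).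
  assert (G : forall k, good s k).
  { induction k as [|k IH]. { intros i Hi; lia. }
    destruct (Rlt_le_dec 0 (X s (S k))) as [P|P].
    { intros i Hi. destruct (Nat.eq_dec i (S k)) as [->|]; auto. apply IH; lia. }
    exfalso.
    assert (F : fail s (S k)) by (split; auto; intros i Hi; apply IH; lia).
    destruct (near_fail s (S k) Hs ltac:(lia) F) as [d [Hd Hn]].
    destruct (Nat.Even_or_Odd k) as [[m Hm]|[m Hm]].
    - set (y := s + d / 2).
      assert (Ay : Aset y).
      { split. unfold y; lra.
        destruct (Hn y) as [Fy|Fy]. { unfold y. replace (s + d/2 - s) with (d/2) by ring.
          rewrite Rabs_right; lra. }
        exists m. replace (2*m+1)%nat with (S k) by lia. auto.
        exists (S m). replace (2*S m+1)%nat with (S k + 2)%nat by lia. auto. }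
      pose proof (Hub y Ay). unfold y in *; lra.
    - assert (Hmn : 0 < Rmin d s) by (apply Rmin_pos; lra).
      pose proof (Rmin_l d s). pose proof (Rmin_r d s).
      set (y := s - Rmin d s / 2).
      assert (By : Bset y).
      { split. unfold y; lra.
        destruct (Hn y) as [Fy|Fy]. { unfold y. replace (s - Rmin d s / 2 - s) with (- (Rmin d s / 2)) by ring.
          rewrite Rabs_Ropp, Rabs_right; lra. }
        exists m. replace (2*m+2)%nat with (S k) by lia. auto.
        exists (S m). replace (2*S m+2)%nat with (S k + 2)%nat by lia. auto. }
      destruct (classic (exists a', Aset a' /\ y < a')) as [[a' [Ha' Hy']]|NE].
      + pose proof (order a' y Ha' By). lra.
      + assert (s <= y).
        { apply Hlub. intros x Hx. destruct (Rle_dec x y) as [|Hxy]; auto.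
          exfalso; apply NE. exists x; split; auto; lra. }
        unfold y in *; lra. }
  exists s. split; auto. intros n Hn. apply (G n). lia.
Qed.

Lemma uniq_lt u v : 0 < u < v -> (forall n, (1 <= n)%nat -> 0 < X u n) ->
  (forall n, (1 <= n)%nat -> 0 < X v n) ->
  is_liminf (fun n : nat => ell n / (INR n ^ 2 * s0 n)) 0 -> False.
Proof.
  intros Huv Pu Pv [_ Hl].
  set (d := v - u).
  assert (Hd : 0 < d) by (unfold d; lra).
  destruct (Hl (d * d / 4) ltac:(nra) 1%nat) as [n [Hn Hlt]].
  cbv beta in Hlt.
  assert (Gu : good u (S n)) by (intros i Hi; apply Pu; lia).
  assert (Gv : good v (S n)) by (intros i Hi; apply Pv; lia).
  destruct (comp u v (S n) Huv Gu Gv n ltac:(lia)) as [C _].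
  destruct n as [|m]. lia.
  assert (Bu : s0 (S m) * (X u (S m) * X u (S m)) <= ell (S m)).
  { apply ellb. apply Pu; lia. assert (0 < X u (S (S m))) by (apply Pu; lia). lra.
    apply (kcond u (S m)); auto. intros i Hi; apply Pu; lia. }
  assert (Bv : s0 (S m) * (X v (S m) * X v (S m)) <= ell (S m)).
  { apply ellb. apply Pv; lia. assert (0 < X v (S (S m))) by (apply Pv; lia). lra.
    apply (kcond v (S m)); auto. intros i Hi; apply Pv; lia. }
  unfold e in C. set (N := INR (S m)) in *.
  assert (HN : 1 <= N) by (unfold N; rewrite S_INR; pose proof (pos_INR m); lra).
  assert (P0 : 0 < s0 (S m)) by (apply Hs0; lia).
  set (U := X u (S m)) in *. set (V := X v (S m)) in *.
  assert (Up : 0 < U) by (apply Pu; lia). assert (Vp : 0 < V) by (apply Pv; lia).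
  set (g := sg (S (S m))) in C.
  assert (Hg : g * g = 1) by apply sg_sq.
  assert (Nd : 0 < N * d) by nra.
  assert (Sq : (N * d) * (N * d) <= (V - U) * (V - U)).
  { assert ((N*d)*(N*d) <= (g * (V - U)) * (g * (V - U))) by (fold d in C; apply Rmult_le_compat; lra).
    replace ((g * (V - U)) * (g * (V - U))) with ((g*g) * ((V - U)*(V-U))) in H by ring.
    rewrite Hg in H. lra. }
  assert (Sq2 : (V - U) * (V - U) <= 2 * (U*U) + 2 * (V*V)) by nra.
  assert (Fin : d * d / 4 * (N ^ 2 * s0 (S m)) <= ell (S m)).
  { assert (s0 (S m) * ((N * d) * (N * d)) <= 4 * ell (S m)) by nra. simpl. nra. }
  assert (0 < N ^ 2 * s0 (S m)) by (apply Rmult_lt_0_compat; [apply pow_lt; lra | lra]).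
  assert (d * d / 4 <= ell (S m) / (N ^ 2 * s0 (S m))).
  { apply (Rmult_le_reg_r (N ^ 2 * s0 (S m))); auto.
    replace (ell (S m) / (N ^ 2 * s0 (S m)) * (N ^ 2 * s0 (S m))) with (ell (S m)) by (field; lra).
    exact Fin. }
  lra.
Qed.

Lemma main_sec : is_liminf (fun n : nat => ell n / (INR n ^ 2 * s0 n)) 0 ->
  exists! x1 : R, 0 < x1 /\ forall n : nat, (1 <= n)%nat -> 0 < X x1 n.
Proof.
  intro Hl. destruct exist as [x1 [Hp Hg]]. exists x1. split. split; auto.
  intros y [Hy Hyg]. destruct (Rtotal_order x1 y) as [Hlt|[Heq|Hgt]]; auto.
  - exfalso. apply (uniq_lt x1 y); auto.
  - exfalso. apply (uniq_lt y x1); auto.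
Qed.
End Main.

Theorem corollary5p7
  (ell s0 s1 sm1 kappa : nat -> R) (x0 : R)
  (Hell : forall n : nat, (1 <= n)%nat -> 0 < ell n)
  (Hs0 : forall n : nat, (1 <= n)%nat -> 0 < s0 n)
  (Hs1 : forall n : nat, (1 <= n)%nat -> 0 < s1 n)
  (Hsm1 : forall n : nat, (1 <= n)%nat -> 0 < sm1 n)
  (Hsig : forall n : nat, (1 <= n)%nat -> Rmax (sm1 n) (s1 n) <= s0 n)
  (Hkappa : forall n : nat, (1 <= n)%nat -> 0 <= kappa n)
  (Hliminf : is_liminf (fun n : nat => ell n / (INR n ^ 2 * s0 n)) 0)
  (Hx0 : sm1 1%nat * x0 >= - kappa 1%nat) :
  exists! x1 : R, 0 < x1 /\
    forall n : nat, (1 <= n)%nat -> 0 < rec_seq ell s0 s1 sm1 kappa x0 x1 n.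
Proof.
  apply (main_sec ell s0 s1 sm1 kappa x0); assumption.
Qed.
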